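(* Let $\mathbb{A}$ be a 2-category and $p:e\to b$ a 1-cell such that $\mathbb{A}$ has the two-dimensional cokernel diagram of $p$, a right Kan extension $(t,\gamma)$ of $p$ along $p$ exists, and it is preserved by $\delta^0:b\to b\uparrow_pb$. Let $\ell:b\uparrow_pb\to b$ be the unique 1-cell with $\ell\delta^0=\mathrm{id}_b$, $\ell\delta^1=t$, $\mathrm{id}_\ell\ast\alpha=\gamma$, and let $\bar\ell:b\uparrow_pb\uparrow_pb\to b$ be the unique 1-cell with $\bar\ell D^0=\ell$ and $\bar\ell D^2=t\ell$. Then $\bar\ell D^1$ is the unique 1-cell $k:b\uparrow_pb\to b$ such that $k\delta^1=tt$, $k\delta^0=\mathrm{id}_b$ and $\mathrm{id}_k\ast\alpha=\gamma\cdot(\mathrm{id}_t\ast\gamma)$.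
   Context: A 2-category is a $\mathbf{Cat}$-enriched category; composition of 1-cells is juxtaposition, vertical composition of 2-cells is $\cdot$, horizontal composition is $\ast$, $\mathrm{id}_f$ is the identity 2-cell on $f$. Opcomma object of $p$ along itself: an object $b\uparrow_p b$ with 1-cells $\delta^0,\delta^1:b\to b\uparrow_p b$ and a 2-cell $\alpha:\delta^1p\Rightarrow\delta^0p$ such that for every object $y$ the functor $h\mapsto(h\delta^0,h\delta^1,\mathrm{id}_h\ast\alpha)$, $\xi\mapsto(\xi\ast\mathrm{id}_{\delta^0},\xi\ast\mathrm{id}_{\delta^1})$ is an isomorphism from $\mathbb{A}(b\uparrow_p b,y)$ onto the category of triples $(h_0,h_1:b\to y,\ \beta:h_1p\Rightarrow h_0p)$ with morphisms pairs of 2-cells $(\xi_0:h_0\Rightarrow h_0',\xi_1:h_1\Rightarrow h_1')$ satisfying $(\xi_0\ast\mathrm{id}_p)\cdot\beta=\beta'\cdot(\xi_1\ast\mathrm{id}_p)$. Two-dimensional pushout of a span $f_0:c\to c_0$, $f_1:c\to c_1$: an object $P$ with $q_0:c_0\to P$, $q_1:c_1\to P$, $q_0f_0=q_1f_1$, such that for every $y$, $k\mapsto(kq_0,kq_1)$ is an isomorphism from $\mathbb{A}(P,y)$ onto the category of pairs $(k_0,k_1)$ with $k_0f_0=k_1f_1$, whose morphisms are pairs of 2-cells $(\xi_0,\xi_1)$ with $\xi_0\ast\mathrm{id}_{f_0}=\xi_1\ast\mathrm{id}_{f_1}$. $\mathbb{A}$ has the two-dimensional cokernel diagram of $p$ if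 it has an opcomma object $b\uparrow_p b$ of $p$ along itself and a two-dimensional pushout $b\uparrow_pb\uparrow_pb$ of the span $(\delta^0,\delta^1)$, with 1-cells $D^0,D^2:b\uparrow_pb\to b\uparrow_pb\uparrow_pb$ satisfying $D^2\delta^0=D^0\delta^1$. Then $D^1:b\uparrow_pb\to b\uparrow_pb\uparrow_pb$ denotes the unique 1-cell with $D^1\delta^1=D^2\delta^1$, $D^1\delta^0=D^0\delta^0$ and $\mathrm{id}_{D^1}\ast\alpha=(\mathrm{id}_{D^0}\ast\alpha)\cdot(\mathrm{id}_{D^2}\ast\alpha)$. Right Kan extension of $f:z\to y$ along $g:z\to x$: a pair $(r:x\to y,\gamma:rg\Rightarrow f)$ such that for each $k:x\to y$, $\beta\mapsto\gamma\cdot(\beta\ast\mathrm{id}_g)$ is a bijection from 2-cells $k\Rightarrow r$ to 2-cells $kg\Rightarrow f$. A 1-cell $d:y\to y'$ preserves it if $(dr,\mathrm{id}_d\ast\gamma)$ is a right Kan extension of $df$ along $g$. *)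

(* Defs.v *)
(* Strict 2-categories (Cat-enriched categories) presented in the single-sorted,
   essentially algebraic style: one type of objects, one type of 1-cells with
   domain/codomain, one type of 2-cells with source/target 1-cells.  Operations
   are total functions, and the axioms are imposed under composability hypotheses.
   This avoids dependent-type transports while being equivalent to a Cat-enriched
   category. *)

Record TwoCat := {
  Ob : Type; Mor : Type; Cell : Type;
  dom : Mor -> Ob; cod : Mor -> Ob;
  idm : Ob -> Mor;
  comp : Mor -> Mor -> Mor;            (* comp g f = g f  (first f, then g) *)
  src : Cell -> Mor; tgt : Cell -> Mor;
  id2 : Mor -> Cell;
  vcomp : Cell -> Cell -> Cell;        (* vcomp b a = b . a  (first a) *)
  hcomp : Cell -> Cell -> Cell;        (* hcomp b a = b * a, a on the right (first) *)
  dom_idm : forall a, dom (idm a) = a;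
  cod_idm : forall a, cod (idm a) = a;
  dom_comp : forall f g, cod f = dom g -> dom (comp g f) = dom f;
  cod_comp : forall f g, cod f = dom g -> cod (comp g f) = cod g;
  comp_idl : forall f, comp (idm (cod f)) f = f;
  comp_idr : forall f, comp f (idm (dom f)) = f;
  comp_assoc : forall f g h, cod f = dom g -> cod g = dom h ->
      comp h (comp g f) = comp (comp h g) f;
  dom_src_tgt : forall a, dom (src a) = dom (tgt a);
  cod_src_tgt : forall a, cod (src a) = cod (tgt a);
  src_id2 : forall f, src (id2 f) = f;
  tgt_id2 : forall f, tgt (id2 f) = f;
  src_vcomp : forall a b, tgt a = src b -> src (vcomp b a) = src a;
  tgt_vcomp : forall a b, tgt a = src b -> tgt (vcomp b a) = tgt b;
  vcomp_idl : forall a, vcomp (id2 (tgt a)) a = a;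
  vcomp_idr : forall a, vcomp a (id2 (src a)) = a;
  vcomp_assoc : forall a b c, tgt a = src b -> tgt b = src c ->
      vcomp c (vcomp b a) = vcomp (vcomp c b) a;
  src_hcomp : forall a b, cod (src a) = dom (src b) ->
      src (hcomp b a) = comp (src b) (src a);
  tgt_hcomp : forall a b, cod (src a) = dom (src b) ->
      tgt (hcomp b a) = comp (tgt b) (tgt a);
  hcomp_id2 : forall f g, cod f = dom g -> hcomp (id2 g) (id2 f) = id2 (comp g f);
  interchange : forall a a' b b', tgt a = src a' -> tgt b = src b' ->
      cod (src a) = dom (src b) ->
      hcomp (vcomp b' b) (vcomp a' a) = vcomp (hcomp b' a') (hcomp b a);
  hcomp_idl : forall a, hcomp (id2 (idm (cod (src a)))) a = a;
  hcomp_idr : forall a, hcomp a (id2 (idm (dom (src a)))) = a;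
  hcomp_assoc : forall a b c, cod (src a) = dom (src b) -> cod (src b) = dom (src c) ->
      hcomp c (hcomp b a) = hcomp (hcomp c b) a
}.

Arguments dom {_} _. Arguments cod {_} _. Arguments idm {_} _.
Arguments comp {_} _ _. Arguments src {_} _. Arguments tgt {_} _.
Arguments id2 {_} _. Arguments vcomp {_} _ _. Arguments hcomp {_} _ _.

Section Defs.
Variable C : TwoCat.

Definition hom1 (f : Mor C) (a b : Ob C) : Prop := dom f = a /\ cod f = b.
Definition cell2 (al : Cell C) (f g : Mor C) : Prop := src al = f /\ tgt al = g.

(* Opcomma object (O, d0, d1, al) of p : e -> b along itself,
   al : d1 p => d0 p; the comparison functor A(O,y) -> triples is an
   isomorphism of categories (bijective on objects, fully faithful). *)
Definition is_opcomma (e b : Ob C) (p : Mor C) (O : Ob C) (d0 d1 : Mor C)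
    (al : Cell C) : Prop :=
  hom1 p e b /\ hom1 d0 b O /\ hom1 d1 b O /\
  cell2 al (comp d1 p) (comp d0 p) /\
  (* bijective on objects *)
  (forall (y : Ob C) (h0 h1 : Mor C) (be : Cell C),
     hom1 h0 b y -> hom1 h1 b y -> cell2 be (comp h1 p) (comp h0 p) ->
     exists! h : Mor C, hom1 h O y /\ comp h d0 = h0 /\ comp h d1 = h1 /\
                        hcomp (id2 h) al = be) /\
  (* bijective on hom-sets *)
  (forall (y : Ob C) (h h' : Mor C) (xi0 xi1 : Cell C),
     hom1 h O y -> hom1 h' O y ->
     cell2 xi0 (comp h d0) (comp h' d0) -> cell2 xi1 (comp h d1) (comp h' d1) ->
     vcomp (hcomp xi0 (id2 p)) (hcomp (id2 h) al)
       = vcomp (hcomp (id2 h') al) (hcomp xi1 (id2 p)) ->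
     exists! xi : Cell C, cell2 xi h h' /\ hcomp xi (id2 d0) = xi0 /\
                          hcomp xi (id2 d1) = xi1).

Definition is_2pushout (c c0 c1 : Ob C) (f0 f1 : Mor C) (P : Ob C) (q0 q1 : Mor C)
    : Prop :=
  hom1 f0 c c0 /\ hom1 f1 c c1 /\ hom1 q0 c0 P /\ hom1 q1 c1 P /\
  comp q0 f0 = comp q1 f1 /\
  (forall (y : Ob C) (k0 k1 : Mor C),
     hom1 k0 c0 y -> hom1 k1 c1 y -> comp k0 f0 = comp k1 f1 ->
     exists! k : Mor C, hom1 k P y /\ comp k q0 = k0 /\ comp k q1 = k1) /\
  (forall (y : Ob C) (k k' : Mor C) (xi0 xi1 : Cell C),
     hom1 k P y -> hom1 k' P y ->
     cell2 xi0 (comp k q0) (comp k' q0) -> cell2 xi1 (comp k q1) (comp k' q1) ->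
     hcomp xi0 (id2 f0) = hcomp xi1 (id2 f1) ->
     exists! xi : Cell C, cell2 xi k k' /\ hcomp xi (id2 q0) = xi0 /\
                          hcomp xi (id2 q1) = xi1).

(* Two-dimensional cokernel diagram of p : opcomma object b↑b = O with
   (d0, d1, al), and a two-dimensional pushout Q of the span (d0, d1) with
   D2 paired with d0 and D0 paired with d1, so that D2 d0 = D0 d1. *)
Definition is_cokernel_diagram (e b : Ob C) (p : Mor C) (O : Ob C) (d0 d1 : Mor C)
    (al : Cell C) (Q : Ob C) (D0 D2 : Mor C) : Prop :=
  is_opcomma e b p O d0 d1 al /\ is_2pushout b O O d0 d1 Q D2 D0.

Definition is_right_kan (z x y : Ob C) (f g r : Mor C) (ga : Cell C) : Prop :=
  hom1 f z y /\ hom1 g z x /\ hom1 r x y /\ cell2 ga (comp r g) f /\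
  forall k : Mor C, hom1 k x y ->
    forall th : Cell C, cell2 th (comp k g) f ->
      exists! be : Cell C, cell2 be k r /\ vcomp ga (hcomp be (id2 g)) = th.

Definition preserves_right_kan (z x y : Ob C) (f g r : Mor C) (ga : Cell C)
    (d : Mor C) (y' : Ob C) : Prop :=
  hom1 d y y' /\ is_right_kan z x y' (comp d f) g (comp d r) (hcomp (id2 d) ga).

End Defs.

Arguments hom1 {_} _ _ _. Arguments cell2 {_} _ _ _.
Arguments is_opcomma {C} _ _ _ _ _ _ _.
Arguments is_2pushout {C} _ _ _ _ _ _ _ _.
Arguments is_cokernel_diagram {C} _ _ _ _ _ _ _ _ _ _.
Arguments is_right_kan {C} _ _ _ _ _ _ _.
Arguments preserves_right_kan {C} _ _ _ _ _ _ _ _ _.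

(* Main.v *)
Require Import Defs.

Lemma whisk (C : TwoCat) (f g : Mor C) (a : Cell C) :
  cod f = dom g -> cod (src a) = dom f ->
  hcomp (id2 (comp g f)) a = hcomp (id2 g) (hcomp (id2 f) a).
Proof.
  intros H1 H2. rewrite <- (hcomp_id2 C f g H1).
  rewrite (hcomp_assoc C a (id2 f) (id2 g)); auto;
  rewrite !src_id2; auto.
Qed.

Theorem lemma4p5 (C : TwoCat) (e b O Q : Ob C)
  (p d0 d1 D0 D1 D2 t l lb : Mor C) (al ga : Cell C)
  (Hcok : is_cokernel_diagram e b p O d0 d1 al Q D0 D2)
  (HD1 : hom1 D1 O Q /\ comp D1 d1 = comp D2 d1 /\ comp D1 d0 = comp D0 d0 /\
         hcomp (id2 D1) al = vcomp (hcomp (id2 D0) al) (hcomp (id2 D2) al))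
  (Hkan : is_right_kan e b b p p t ga)
  (Hpres : preserves_right_kan e b b p p t ga d0 O)
  (Hl : hom1 l O b /\ comp l d0 = idm b /\ comp l d1 = t /\ hcomp (id2 l) al = ga)
  (Hlb : hom1 lb Q b /\ comp lb D0 = l /\ comp lb D2 = comp t l) :
  (hom1 (comp lb D1) O b /\ comp (comp lb D1) d1 = comp t t /\
   comp (comp lb D1) d0 = idm b /\
   hcomp (id2 (comp lb D1)) al = vcomp ga (hcomp (id2 t) ga)) /\
  (forall k : Mor C, hom1 k O b -> comp k d1 = comp t t -> comp k d0 = idm b ->
     hcomp (id2 k) al = vcomp ga (hcomp (id2 t) ga) -> k = comp lb D1).
Proof.
  destruct Hcok as [[[Hpd Hpc] [[d0d d0c] [[d1d d1c] [[als alt] [Hob _]]]]]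
                    [_ [_ [[D2d D2c] [[D0d D0c] [Hsq _]]]]]].
  destruct HD1 as [[D1d D1c] [E1 [E0 Eal]]].
  destruct Hkan as [_ [_ [[td tc] [[gas gat] _]]]].
  destruct Hl as [[ld lc] [l0 [l1 lal]]].
  destruct Hlb as [[lbd lbc] [lb0 lb2]].
  assert (calc : cod (src al) = O) by (rewrite als, cod_comp; congruence).
  assert (H1 : hom1 (comp lb D1) O b).
  { split; [rewrite dom_comp | rewrite cod_comp]; congruence. }
  assert (H2 : comp (comp lb D1) d1 = comp t t).
  { rewrite <- comp_assoc by congruence. rewrite E1, comp_assoc by congruence.
    rewrite lb2, <- comp_assoc by (try rewrite cod_comp; congruence).
    rewrite l1; reflexivity. }
  assert (H3 : comp (comp lb D1) d0 = idm b).
  { rewrite <- comp_assoc by congruence. rewrite E0, comp_assoc by congruence.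
    rewrite lb0; exact l0. }
  assert (H4 : hcomp (id2 (comp lb D1)) al = vcomp ga (hcomp (id2 t) ga)).
  { rewrite whisk by congruence. rewrite Eal.
    replace (hcomp (id2 lb)) with (hcomp (vcomp (id2 lb) (id2 lb)))
      by (pose proof (vcomp_idl C (id2 lb)) as V; rewrite tgt_id2 in V; rewrite V; reflexivity).
    rewrite interchange.
    - rewrite <- !whisk by congruence. rewrite lb0, lb2, lal.
      rewrite whisk by (try rewrite cod_comp; congruence). rewrite lal. reflexivity.
    - rewrite tgt_hcomp, src_hcomp, src_id2, tgt_id2, alt, als by (rewrite src_id2; congruence).
      rewrite !comp_assoc by congruence. rewrite Hsq. reflexivity.
    - rewrite tgt_id2, src_id2; reflexivity.
    - rewrite src_hcomp, !src_id2 by (rewrite src_id2; congruence).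
      rewrite cod_comp by congruence. congruence. }
  split; [tauto|].
  intros k [kd kc] k1 k0 kal.
  assert (Hbe : cell2 (vcomp ga (hcomp (id2 t) ga)) (comp (comp t t) p) (comp (idm b) p)).
  { assert (Hs : src (hcomp (id2 t) ga) = comp t (comp t p)).
    { rewrite src_hcomp, src_id2, gas; auto. rewrite gas, src_id2, cod_comp; congruence. }
    assert (Ht : tgt (hcomp (id2 t) ga) = comp t p).
    { rewrite tgt_hcomp, tgt_id2, gat; auto. rewrite gas, src_id2, cod_comp; congruence. }
    split.
    - rewrite src_vcomp by congruence. rewrite Hs, comp_assoc by congruence. reflexivity.
    - rewrite tgt_vcomp by congruence. rewrite gat, <- Hpc, comp_idl. reflexivity. }
  assert (Hib : hom1 (idm b) b b) by (split; [apply dom_idm | apply cod_idm]).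
  assert (Htt : hom1 (comp t t) b b).
  { split; [rewrite dom_comp | rewrite cod_comp]; congruence. }
  destruct (Hob b (idm b) (comp t t) _ Hib Htt Hbe) as [h [_ Hu]].
  assert (A : k = h) by (symmetry; apply Hu; repeat split; auto).
  assert (B : comp lb D1 = h) by (symmetry; apply Hu; destruct H1; repeat split; auto).
  congruence.
Qed.
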